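(* Let $U\ge 2$ and let $X\subseteq\{-U,\dots,U\}$ be a set of nonzero integers. Then $$\sum_{x,y\in X}\frac{1}{H(\frac xy)}\le O(U\log U).$$
   Context: For a nonzero rational $q$, its height $H(q)$ is $\max(|a|,|b|)$ where $q=\frac ab$ with $a,b$ coprime integers. The $O(\cdot)$ hides an absolute constant. *)

(* Defs.v *)
From Stdlib Require Import Reals.
From mathcomp Require Import all_boot all_order all_algebra.
From mathcomp Require Import Rstruct.
Set Implicit Arguments. Unset Strict Implicit. Unset Printing Implicit Defensive.
Import Order.TTheory GRing.Theory Num.Theory.

(* Height of a rational q = a/b in lowest terms: max(|a|,|b|).
   MathComp's rat stores q as numq q / denq q with coprime numq, denq, denq > 0. *)
Definition height (q : rat) : nat := maxn `|numq q|%N `|denq q|%N.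

(* Main.v *)
Require Import Defs.
From Stdlib Require Import Reals Lra.
From mathcomp Require Import all_boot all_order all_algebra.
From mathcomp Require Import Rstruct.
Import Order.TTheory GRing.Theory Num.Theory.

Local Open Scope R_scope.
Lemma ln_le_sub1 y : (0 < y) -> (ln y <= y - 1).
Proof. intros Hy. pose proof (exp_ineq1_le (ln y)). rewrite exp_ln in H; lra. Qed.

Lemma harm_step (x : R) : (1 <= x) -> (/ (x + 1) <= ln (x + 1) - ln x).
Proof.
  intros Hx.
  assert (Hp : (0 < x / (x+1))) by (apply Rdiv_lt_0_compat; lra).
  pose proof (ln_le_sub1 _ Hp).
  assert (E : x = ((x/(x+1)) * (x+1))) by (field; lra).
  assert (ln x = ln (x/(x+1)) + ln (x+1)).
  { rewrite {1}E. apply ln_mult; lra. }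
  assert ((x/(x+1) - 1 = - / (x+1))) by (field; lra).
  lra.
Qed.

Lemma ln_U_half (U : nat) : le 2 U -> 1 < (1 + 1) * ln (INR U).
Proof.
  intros H. pose proof ln_lt_2.
  assert (H2 : 2 <= INR U) by (replace 2 with (INR 2) by (simpl; lra); apply le_INR; exact H).
  destruct (Rle_lt_or_eq_dec _ _ H2) as [Hl | He].
  - pose proof (ln_increasing 2 (INR U) ltac:(lra) Hl). lra.
  - rewrite <- He. lra.
Qed.
Close Scope R_scope.
From mathcomp Require Import ring lra zify.
Local Open Scope ring_scope.

Lemma harm_step' (x : R) : 1 <= x -> (x+1)^-1 <= ln (x+1) - ln x.
Proof. move=> /RleP H. apply/RleP. exact: harm_step. Qed.

Lemma harm (N : nat) : (1 <= N)%N ->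
  \sum_(1 <= d < N.+1) (d%:R : R)^-1 <= 1 + ln N%:R.
Proof.
elim: N => [//|N IH] _.
case: N IH => [|N] IH.
  rewrite big_nat1 invr1. have -> : ln (1%:R) = 0 by rewrite -INRE /= ln_1. lra.
rewrite big_nat_recr //=.
have H1 := IH isT.
have H2 := harm_step' (N.+1)%:R.
rewrite -[N.+2%:R]natr1.
have H3 : (1 <= N.+1%:R :> R) by rewrite ler1n.
have := H2 H3. lra.
Qed.

Definition fd (d a b : nat) : R :=
  if (d %| a)%N && (d %| b)%N then d%:R / (maxn a b)%:R else 0.

Lemma fd_ge0 d a b : 0 <= fd d a b.
Proof. rewrite /fd; case: ifP => // _; exact: divr_ge0. Qed.

Lemma count_mult d N : (0 < d)%N ->
  \sum_(1 <= a < N.+1) (if (d %| a)%N then 1 else 0 : R) = (N %/ d)%:R.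
Proof.
move=> d0; elim: N => [|N IH]; first by rewrite big_geq // div0n.
rewrite big_nat_recr //= IH divnS //.
by case: (d %| N.+1)%N; rewrite ?add0n ?addr0 // natrD addrC.
Qed.

Lemma T_bound d N : (0 < d)%N ->
  \sum_(1 <= a < N.+1) \sum_(1 <= b < N.+1) fd d a b <= 2 * (N %/ d)%:R.
Proof.
move=> d0; elim: N => [|N IH]; first by rewrite big_geq // div0n mulr0.
rewrite big_nat_recr //=.
under eq_big_nat => a Ha do rewrite big_nat_recr //=.
rewrite big_split /= (big_nat_recr N.+1 _ (fun b => fd d N.+1 b)) //=.
set k : R := (if (d %| N.+1)%N then d%:R / (N.+1)%:R else 0).
have E1 : \sum_(1 <= a < N.+1) fd d a N.+1 =
   k * \sum_(1 <= a < N.+1) (if (d %| a)%N then 1 else 0 : R).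
  rewrite big_distrr; apply: eq_big_nat => a /andP[_ Ha].
  rewrite /fd /k; have -> : maxn a N.+1 = N.+1 by apply/maxn_idPr; exact: ltnW.
  by case: (d %| a)%N; case: (d %| N.+1)%N; rewrite /= ?mulr1 ?mulr0 ?mul0r.
have E2 : \sum_(1 <= b < N.+1) fd d N.+1 b =
   k * \sum_(1 <= a < N.+1) (if (d %| a)%N then 1 else 0 : R).
  rewrite big_distrr; apply: eq_big_nat => a /andP[_ Ha].
  rewrite /fd /k; have -> : maxn N.+1 a = N.+1 by apply/maxn_idPl; exact: ltnW.
  by case: (d %| a)%N; case: (d %| N.+1)%N; rewrite /= ?mulr1 ?mulr0 ?mul0r.
have E3 : fd d N.+1 N.+1 = k by rewrite /fd /k maxnn andbb.
rewrite E1 E2 E3 count_mult // divnS //.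
clear E1 E2 E3; rewrite /k; clear k.
case Hd: (d %| N.+1)%N => /=; last by rewrite add0n; lra.
have Hk : d%:R / N.+1%:R * (N %/ d).+1%:R = 1 :> R.
  have HN : N.+1 = ((N %/ d).+1 * d)%N.
    by rewrite -(divnK Hd) divnS // Hd.
  move: HN; set c1 := (N %/ d).+1 => HN.
  rewrite {1}HN natrM; field.
  by rewrite !pnatr_eq0 -!lt0n d0.
have Hk0 : 0 <= d%:R / N.+1%:R :> R by exact: divr_ge0.
rewrite -[(N %/ d).+1%:R]natr1 in Hk.
rewrite natrD.
move: Hk Hk0 IH.
set c := (N %/ d)%:R. set kk := d%:R / N.+1%:R.
move=> Hk Hk0 IH. nra.
Qed.

Lemma nat_key a b n m : (0 < a)%N -> (0 < m)%N -> coprime n m -> (a * m = n * b)%N ->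
  exists k : nat, [/\ (0 < k)%N, (k %| a)%N, (k %| b)%N & maxn a b = (k * maxn n m)%N].
Proof.
move=> a0 m0 cop E.
have n0 : (0 < n)%N.
  rewrite lt0n; apply/eqP => n0; move: E; rewrite n0 mul0n => /eqP.
  by rewrite muln_eq0 !eqn0Ngt a0 m0.
have : (n %| a * m)%N by rewrite E dvdn_mulr.
rewrite Gauss_dvdl // => /divnK Ha.
set k := (a %/ n)%N in Ha.
have Hb : b = (k * m)%N.
  apply/eqP; have := eqn_mul2l n b (k * m); rewrite eqn0Ngt n0 /= => <-.
  by rewrite -E -Ha mulnCA mulnA.
exists k; split.
- by move: a0; rewrite -Ha muln_gt0 => /andP[].
- by rewrite -Ha dvdn_mulr.
- by rewrite Hb dvdn_mulr.
- by rewrite maxnMr -Ha Hb.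
Qed.

Lemma key (x y : int) : x != 0 -> y != 0 ->
  exists k : nat, [/\ (0 < k)%N, (k %| `|x|)%N, (k %| `|y|)%N &
     maxn `|x|%N `|y|%N = (k * height (x%:~R / y%:~R : rat))%N].
Proof.
move=> x0 y0.
set q : rat := x%:~R / y%:~R.
have E : numq q * y = x * denq q.
  apply: (@intr_inj rat); rewrite !intrM numqE /q.
  set m : rat := (denq _)%:~R. by field; rewrite intr_eq0.
have E' : (`|x| * `|denq q| = `|numq q| * `|y|)%N.
  by rewrite -!abszM E.
have ax : (0 < `|x|)%N by rewrite absz_gt0.
have am : (0 < `|denq q|)%N by rewrite absz_gt0 denq_neq0.
have [k [k0 kx ky km]] := @nat_key _ _ _ _ ax am (coprime_num_den q) E'.
by exists k; split.
Qed.

Definition G (U a b : nat) : R := \sum_(1 <= d < U.+1) fd d a b.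

Lemma G_ge0 U a b : 0 <= G U a b.
Proof. by apply: sumr_ge0 => d _; exact: fd_ge0. Qed.

Lemma point_bound (U : nat) (x y : int) : x != 0 -> y != 0 -> (`|x| <= U)%N ->
  ((height (x%:~R / y%:~R : rat))%:R : R)^-1 <= G U `|x| `|y|.
Proof.
move=> x0 y0 xU.
have [k [k0 kx ky km]] := @key x y x0 y0.
set h := height _ in km *.
have ax : (0 < `|x|)%N by rewrite absz_gt0.
have kU : (k <= U)%N by apply: leq_trans xU; exact: dvdn_leq.
have E : (h%:R : R)^-1 = fd k `|x| `|y|.
  rewrite /fd kx ky /= km natrM invfM mulrA divff ?mul1r //.
  by rewrite pnatr_eq0 -lt0n.
rewrite E /G (bigD1_seq k) //=; first last.
- exact: iota_uniq.
- by rewrite mem_index_iota k0 ltnS.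
have : 0 <= \sum_(i <- index_iota 1 U.+1 | i != k) fd i `|x| `|y|.
  by apply: sumr_ge0 => d _; exact: fd_ge0.
lra.
Qed.

Lemma sub_sum (I : eqType) (s s' : seq I) (F : I -> R) :
  (forall i, 0 <= F i) -> uniq s -> uniq s' -> {subset s <= s'} ->
  \sum_(i <- s) F i <= \sum_(i <- s') F i.
Proof.
move=> F0 us us' ss'.
have Hp : perm_eq s [seq i <- s' | i \in s].
  apply: uniq_perm => //; first exact: filter_uniq.
  by move=> i; rewrite mem_filter; case Hi: (i \in s) => //=; rewrite ss'.
rewrite (perm_big _ Hp) /= big_filter big_mkcond /=.
by apply: ler_sum => i _; case: ifP.
Qed.

Lemma ler_sum_mem (I : eqType) (s : seq I) (F1 F2 : I -> R) :
  (forall i, i \in s -> F1 i <= F2 i) ->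
  \sum_(i <- s) F1 i <= \sum_(i <- s) F2 i.
Proof. by move=> H; rewrite !big_seq; apply: ler_sum. Qed.

Definition L (U : nat) : seq int :=
  [seq Posz a | a <- index_iota 1 U.+1] ++ [seq - Posz a | a <- index_iota 1 U.+1].

Lemma L_uniq U : uniq (L U).
Proof.
rewrite /L cat_uniq; apply/and3P; split.
- rewrite map_inj_uniq ?iota_uniq //; by move=> ? ? [].
- apply/hasPn => z /mapP [a Ha ->]; apply/mapP => -[b Hb E].
  move: Ha Hb; rewrite !mem_index_iota => /andP[Ha _] /andP[Hb _].
  move: E Ha Hb; lia.
- rewrite map_inj_uniq ?iota_uniq //; by move=> ? ? /eqP; rewrite eqr_opp => /eqP [].
Qed.

Lemma L_mem U (x : int) : x != 0 -> (`|x| <= U)%N -> x \in L U.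
Proof.
case: x => n x0 xU; rewrite /L mem_cat.
- apply/orP; left; apply/mapP; exists n => //.
  by rewrite mem_index_iota ltnS xU andbT lt0n; move: x0; apply: contra => /eqP ->.
- apply/orP; right; apply/mapP; exists n.+1; last by rewrite NegzE.
  by rewrite mem_index_iota ltnS.
Qed.

Lemma sum_L U (F : nat -> R) :
  \sum_(x <- L U) F `|x|%N = 2 * \sum_(1 <= a < U.+1) F a.
Proof.
rewrite /L big_cat /= !big_map.
under [X in _ + X]eq_bigr => a _ do rewrite abszN.
by rewrite /= mulr2n mulrDl mul1r.
Qed.

Theorem lemma11p4 :
  exists C : R, forall (U : nat) (X : seq int),
    (2 <= U)%N -> uniq X ->
    (forall x, x \in X -> x != 0 /\ (absz x <= U)%N) ->
    \sum_(x <- X) \sum_(y <- X) ((height (x%:~R / y%:~R : rat))%:R : R)^-1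
      <= C * (U%:R : R) * ln (U%:R : R).
Proof.
exists 24 => U X U2 uX HX.
have U1 : (1 <= U)%N by apply: leq_trans U2.
apply: (@le_trans _ _ (\sum_(x <- X) \sum_(y <- X) G U `|x| `|y|)).
  apply: ler_sum_mem => x hx; apply: ler_sum_mem => y hy.
  have [x0 xU] := HX x hx; have [y0 _] := HX y hy.
  exact: point_bound.
apply: (@le_trans _ _ (\sum_(x <- X) \sum_(y <- L U) G U `|x| `|y|)).
  apply: ler_sum_mem => x hx; apply: sub_sum => //.
  - by move=> y; exact: G_ge0.
  - exact: L_uniq.
  - by move=> y /HX [y0 yU]; exact: L_mem.
apply: (@le_trans _ _ (\sum_(x <- L U) \sum_(y <- L U) G U `|x| `|y|)).
  apply: sub_sum => //.
  - by move=> x; apply: sumr_ge0 => y _; exact: G_ge0.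
  - exact: L_uniq.
  - by move=> x /HX [x0 xU]; exact: L_mem.
have -> : \sum_(x <- L U) \sum_(y <- L U) G U `|x| `|y| =
    4 * \sum_(1 <= a < U.+1) \sum_(1 <= b < U.+1) G U a b.
  rewrite (eq_bigr (fun x => 2 * \sum_(1 <= b < U.+1) G U `|x| b)); last first.
    by move=> x _; exact: (sum_L U (fun b => G U `|x| b)).
  rewrite (sum_L U (fun a => 2 * \sum_(1 <= b < U.+1) G U a b)) -big_distrr /=.
  ring.
have -> : \sum_(1 <= a < U.+1) \sum_(1 <= b < U.+1) G U a b =
    \sum_(1 <= d < U.+1) \sum_(1 <= a < U.+1) \sum_(1 <= b < U.+1) fd d a b.
  rewrite /G; under eq_bigr => a _ do rewrite exchange_big_nat.
  by rewrite exchange_big_nat.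
apply: (@le_trans _ _ (4 * \sum_(1 <= d < U.+1) (2 * U%:R * (d%:R)^-1))).
  rewrite ler_pM2l //; apply: ler_sum_mem => d; rewrite mem_index_iota => /andP[d0 _].
  apply: le_trans (@T_bound d U d0) _.
  rewrite -mulrA ler_pM2l // ler_pdivlMr ?ltr0n // -natrM ler_nat.
  exact: leq_divM.
rewrite -big_distrr /=.
have H1 := @harm U U1.
have H2 : 1 < (1 + 1) * ln U%:R.
  apply/RltP; rewrite -INRE; exact: (@ln_U_half U (ssrnat.leP U2)).
have U0 : 0 <= U%:R :> R by [].
set S := \sum_(1 <= d < U.+1) _ in H1 *.
set l := ln U%:R in H1 H2 *.
have A : U%:R * S <= U%:R * (1 + l) by rewrite ler_wpM2l.
have B : U%:R * 1 <= U%:R * ((1 + 1) * l) by rewrite ler_wpM2l // ltW.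
lra.
Qed.
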